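(* Let $R\ge1$, $0\le m<2^R$, $\mu$ a partition of $m$, and $\lambda$ a $2^R$-parent of $\mu$ with affected hook-length $h=h^\lambda_\mu$. Then, modulo $2$, \[ \eta^\lambda_\mu\equiv N_\lambda(h)-\mathbb{I}_{H(\lambda)}(h-2^{R-1})+\mathbb{I}_{H(\lambda)}(h+2^{R-1})+\mathbb{I}_{H(\lambda)}(h-3\cdot2^{R-1}). \]
   Context: $\mathrm{Od}(N)=\pm1$ according as the odd part of $N\ge1$ is $\equiv1$ or $\equiv3\pmod4$. For a partition $\lambda=(\lambda_1\ge\dots\ge\lambda_k>0)$, $H(\lambda):=\{\lambda_i+k-i\}$; $X^{+r}:=\{x+r:x\in X\}\cup\{0,\dots,r-1\}$. A partition $\lambda$ of $2^R+m$ is a $2^R$-parent of $\mu\vdash m$ ($m<2^R$) if there is $h\in H(\lambda)$, $h\ge2^R$, $h-2^R\notin H(\lambda)$, with $(H(\lambda)\cup\{h-2^R\})\setminus\{h\}=H(\mu)^{+r}$ for some $r\ge0$ (i.e. $\mu$ is obtained by removing a $2^R$ rim hook); this unique $h$ is the affected hook-length $h^\lambda_\mu$. $\eta^\lambda_\mu\in\mathbb{Z}/2$ is defined by $(-1)^{\eta^\lambda_\mu}=\prod_{x\in H(\lambda),x\ne h}\mathrm{Od}(|h-x|)/\mathrm{Od}(|h-2^R-x|)$. $N_\lambda(h):=\#\{y\in H(\lambda):h-2^R<y<h\}$, and $\mathbb{I}_X(x)=1$ if $x\in X$, $0$ otherwise. *)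

(* Defs.v *)
From mathcomp Require Import all_boot all_order all_algebra.
Set Implicit Arguments. Unset Strict Implicit. Unset Printing Implicit Defensive.
Import Order.TTheory GRing.Theory Num.Theory.

Definition oddpart (N : nat) : nat := N %/ 2 ^ logn 2 N.

(* Od(N) = 1 if the odd part of N is 1 mod 4, -1 if it is 3 mod 4
   (only meaningful for N >= 1; the value at 0 is irrelevant). *)
Definition Od (N : nat) : rat := if oddpart N %% 4 == 1 then 1%R else (-1)%R.

Definition distn (a b : nat) : nat := (a - b) + (b - a).

Definition is_partition (lam : seq nat) (n : nat) : bool :=
  [&& sorted (fun a b => b <= a) lam, all (fun x => 0 < x) lam & sumn lam == n].

Definition H (lam : seq nat) : seq nat :=
  let k := size lam in [seq nth 0 lam i + (k - i.+1) | i <- iota 0 k].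

Definition shiftb (X : seq nat) (r : nat) : seq nat :=
  [seq x + r | x <- X] ++ iota 0 r.

Definition parent_with (R : nat) (lam mu : seq nat) (h : nat) : Prop :=
  [/\ h \in H lam, 2 ^ R <= h, (h - 2 ^ R) \notin H lam &
   exists r : nat, (h - 2 ^ R) :: [seq x <- H lam | x != h] =i shiftb (H mu) r].

(* the sign (-1)^{eta^lam_mu} *)
Definition eta_sign (R : nat) (lam : seq nat) (h : nat) : rat :=
  \prod_(x <- H lam | x != h) (Od (distn h x) / Od (distn (h - 2 ^ R) x))%R.

Definition Nlam (R : nat) (lam : seq nat) (h : nat) : nat :=
  count (fun y => (h - 2 ^ R < y) && (y < h)) (H lam).

Definition Ind (X : seq nat) (z : int) : int :=
  match z with Posz n => Posz (n \in X : nat) | Negz _ => Posz 0 end.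

(* Main.v *)
Require Import Defs.
From mathcomp Require Import all_boot all_order all_algebra zify.
Import Order.TTheory GRing.Theory Num.Theory.


Lemma oddpart_odd a : odd a -> oddpart a = a.
Proof.
by move=> Ha; rewrite /oddpart logn_coprime ?expn0 ?divn1 // coprime2n.
Qed.

Lemma oddpart_double a : (0 < a)%N -> oddpart (2 * a) = oddpart a.
Proof.
move=> Ha; rewrite /oddpart lognM // logn_prime // eqxx expnD expn1 divnMl //.
Qed.

Lemma Od_double a : (0 < a)%N -> Od (2 * a) = Od a.
Proof. by move=> Ha; rewrite /Od oddpart_double. Qed.

Lemma Od_odd a : odd a -> Od a = if (a %% 4 == 1)%N then 1%R else (-1)%R.
Proof. by move=> Ha; rewrite /Od oddpart_odd. Qed.

Lemma evenE a : ~~ odd a -> a = (2 * a./2)%N.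
Proof. by move=> Ha; rewrite mul2n halfK (negbTE Ha) subn0. Qed.

Lemma oddI n : (n %% 2 = 1)%N -> odd n.
Proof. by rewrite modn2; case: (odd n). Qed.

Lemma lemA R a : (0 < a < 2 ^ R.+1)%N ->
  (Od a * Od (a + 2 ^ R.+1))%R = if a == 2 ^ R then (-1)%R else 1%R.
Proof.
elim: R a => [|R IH] a.
  move=> Ha; have -> : a = 1%N by lia.
  by rewrite /Od /oddpart /= mul1r.
move=> Ha; case Hodd: (odd a).
  have Ho : (a %% 2 = 1)%N by rewrite modn2 Hodd.
  have Hne : (a == 2 ^ R.+1) = false.
    apply/negbTE; apply/eqP=> E; move: Hodd; rewrite E expnS oddM //.
  have Ho2 : odd (a + 2 ^ R.+2) by apply: oddI; rewrite !expnS; lia.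
  rewrite Hne (Od_odd _ Hodd) (Od_odd _ Ho2).
  have -> : ((a + 2 ^ R.+2) %% 4 = a %% 4)%N.
    by rewrite !expnS mulnA -modnDm modnMr addn0 modn_mod.
  by case: ifP => _; rewrite ?mulr1 ?mulrNN ?mulr1.
have E := evenE _ (negbT Hodd).
set a' := a./2 in E *.
have Ha' : (0 < a' < 2 ^ R.+1)%N by move: Ha; rewrite E expnS; lia.
have -> : (a + 2 ^ R.+2 = 2 * (a' + 2 ^ R.+1))%N by rewrite E expnS; lia.
rewrite E Od_double; last lia.
rewrite Od_double; last lia.
rewrite IH //.
have -> // : (2 * a' == 2 ^ R.+1)%N = (a' == 2 ^ R).
by rewrite expnS eqn_mul2l.
Qed.

Lemma lemB R a : (0 < a < 2 ^ R.+1)%N ->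
  (Od a * Od (2 ^ R.+1 - a))%R = if a == 2 ^ R then 1%R else (-1)%R.
Proof.
elim: R a => [|R IH] a.
  move=> Ha; have -> : a = 1%N by lia.
  by rewrite /Od /oddpart /= mul1r.
move=> Ha; case Hodd: (odd a).
  have Ho : (a %% 2 = 1)%N by rewrite modn2 Hodd.
  have Hne : (a == 2 ^ R.+1) = false.
    apply/negbTE; apply/eqP=> E; move: Hodd; rewrite E expnS oddM //.
  have Ho2 : odd (2 ^ R.+2 - a) by apply: oddI; move: Ha; rewrite !expnS; lia.
  rewrite Hne (Od_odd _ Hodd) (Od_odd _ Ho2).
  set t := 2 ^ R in Ha *.
  have H4 : (2 ^ R.+2 = 4 * t)%N by rewrite !expnS mulnA.
  rewrite H4; rewrite H4 in Ha.
  have : (a %% 4 = 1)%N \/ (a %% 4 = 3)%N by lia.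
  case=> Hm.
    have -> : ((4 * t - a) %% 4 = 3)%N by lia.
    by rewrite Hm /= mul1r.
  have -> : ((4 * t - a) %% 4 = 1)%N by lia.
  by rewrite Hm /= mulr1.
have E := evenE _ (negbT Hodd).
set a' := a./2 in E *.
have Ha' : (0 < a' < 2 ^ R.+1)%N by move: Ha; rewrite E expnS; lia.
have -> : (2 ^ R.+2 - a = 2 * (2 ^ R.+1 - a'))%N by rewrite E expnS; lia.
rewrite E Od_double; last lia.
rewrite Od_double; last lia.
rewrite IH //.
have -> // : (2 * a' == 2 ^ R.+1)%N = (a' == 2 ^ R).
by rewrite expnS eqn_mul2l.
Qed.

Lemma Od_inv b : ((Od b)^-1 = Od b)%R.
Proof. by rewrite /Od; case: ifP => _; rewrite ?invr1 ?invrN1. Qed.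

Definition ex (R h x : nat) : nat :=
  (((h - 2 ^ R.+1 < x) && (x < h)) + (x + 2 ^ R == h) + (x == h + 2 ^ R)
   + (x + 3 * 2 ^ R == h))%N.

Lemma factor R h x : (2 ^ R.+1 <= h)%N -> (h < 2 ^ R.+2)%N -> (x < 2 ^ R.+2)%N ->
  x != h -> x != h - 2 ^ R.+1 ->
  (Od (distn h x) / Od (distn (h - 2 ^ R.+1) x))%R = ((-1) ^+ ex R h x)%R.
Proof.
move=> H1 H2 H3 /eqP H4 /eqP H5.
rewrite Od_inv /ex /distn.
have E1 : (2 ^ R.+1 = 2 * 2 ^ R)%N by rewrite expnS.
have E2 : (2 ^ R.+2 = 4 * 2 ^ R)%N by rewrite !expnS mulnA.
have Hq : (0 < 2 ^ R)%N by rewrite expn_gt0.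
rewrite E2 in H2 H3.
have [Hx|Hx] : (x < h - 2 ^ R.+1)%N \/ (h - 2 ^ R.+1 <= x)%N by lia.
  set a := (h - x - 2 ^ R.+1)%N.
  have -> : (h - x + (x - h) = a + 2 ^ R.+1)%N by lia.
  have -> : (h - 2 ^ R.+1 - x + (x - (h - 2 ^ R.+1)) = a)%N by lia.
  rewrite mulrC lemA; last lia.
  have -> : (((h - 2 ^ R.+1 < x) && (x < h)) + (x + 2 ^ R == h) + (x == h + 2 ^ R)
   + (x + 3 * 2 ^ R == h))%N = (a == 2 ^ R) by lia.
  by case: (a == 2 ^ R).
have [Hx2|Hx2] : (x < h)%N \/ (h <= x)%N by lia.
  set a := (h - x)%N.
  have -> : (h - x + (x - h) = a)%N by lia.
  have -> : (h - 2 ^ R.+1 - x + (x - (h - 2 ^ R.+1)) = 2 ^ R.+1 - a)%N by lia.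
  rewrite lemB; last lia.
  have -> : (((h - 2 ^ R.+1 < x) && (x < h)) + (x + 2 ^ R == h) + (x == h + 2 ^ R)
   + (x + 3 * 2 ^ R == h))%N = (1 + (a == 2 ^ R))%N by lia.
  by case: (a == 2 ^ R); rewrite ?expr2 ?mulrNN ?mulr1 ?addn0 ?expr1.
set a := (x - h)%N.
have -> : (h - x + (x - h) = a)%N by lia.
have -> : (h - 2 ^ R.+1 - x + (x - (h - 2 ^ R.+1)) = a + 2 ^ R.+1)%N by lia.
rewrite lemA; last lia.
have -> : (((h - 2 ^ R.+1 < x) && (x < h)) + (x + 2 ^ R == h) + (x == h + 2 ^ R)
   + (x + 3 * 2 ^ R == h))%N = (a == 2 ^ R) by lia.
by case: (a == 2 ^ R).
Qed.
Lemma size_le_sumn (s : seq nat) : all (fun x => 0 < x) s -> size s <= sumn s.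
Proof. elim: s => //= y s IH /andP[Hy /IH]; lia. Qed.

Lemma nth_bound (s : seq nat) i : all (fun x => 0 < x) s -> i < size s ->
  nth 0 s i + (size s - i.+1) <= sumn s.
Proof.
elim: s i => // y s IH [|i] /= /andP[Hy Hs] Hi.
  have := @size_le_sumn s Hs; lia.
have := IH i Hs Hi; lia.
Qed.

Lemma H_bound lam x : all (fun x => 0 < x) lam -> x \in H lam -> x <= sumn lam.
Proof.
move=> Hp /mapP[i]; rewrite mem_iota add0n => Hi ->.
exact: nth_bound.
Qed.

Lemma H_uniq lam : sorted (fun a b => b <= a) lam -> uniq (H lam).
Proof.
move=> Hs; rewrite /H map_inj_in_uniq ?iota_uniq //.
have Hm := sorted_leq_nth (fun y x z (h1 : y <= x) (h2 : z <= y) => leq_trans h2 h1)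
   (fun a => leqnn a) 0 Hs.
move=> i j; rewrite !mem_iota !add0n => Hi Hj E.
have [Hij|Hij|//] := ltngtP i j.
  have := Hm i j; rewrite !inE => /(_ Hi Hj (ltnW Hij)); lia.
have := Hm j i; rewrite !inE => /(_ Hj Hi (ltnW Hij)); lia.
Qed.

Lemma sum_count (s : seq nat) (P Q : pred nat) :
  (\sum_(x <- s | P x) (Q x : nat))%N = count (predI P Q) s.
Proof. elim: s => [|y s IH]; rewrite ?big_nil ?big_cons //= IH; case: (P y) => //=. Qed.
Local Open Scope ring_scope.

Lemma sign_sub (a b : nat) : (-1 : rat) ^ (a%:Z - b%:Z) = (-1) ^+ (a + b)%N.
Proof.
have [H|H] : (b <= a)%N \/ (a < b)%N by lia.
  rewrite subzn // -[LHS]signr_odd -[RHS]signr_odd oddB // oddD.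
  by case: (odd a); case: (odd b).
have -> : a%:Z - b%:Z = Negz (b - a).-1.
  rewrite NegzE; lia.
rewrite /exprz invr_sign -[LHS]signr_odd -[RHS]signr_odd.
have -> : (b - a).-1.+1 = (b - a)%N by lia.
rewrite oddB ?oddD; last lia.
by case: (odd a); case: (odd b).
Qed.

Lemma Ind_sub (X : seq nat) (a b : nat) :
  Ind X (a%:Z - b%:Z) = if (b <= a)%N then ((a - b)%N \in X : nat)%:Z else 0.
Proof.
case: leqP => H; first by rewrite subzn.
have -> : a%:Z - b%:Z = Negz (b - a).-1 by rewrite NegzE; lia.
by [].
Qed.

Theorem proposition3p5 (R m : nat) (mu lam : seq nat) (h : nat) :
  (1 <= R)%N -> (m < 2 ^ R)%N ->
  is_partition mu m -> is_partition lam (2 ^ R + m) ->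
  parent_with R lam mu h ->
  eta_sign R lam h =
  (-1 : rat) ^ ((Nlam R lam h)%:Z
                 - Ind (H lam) (h%:Z - (2 ^ R.-1)%N%:Z)
                 + Ind (H lam) (h%:Z + (2 ^ R.-1)%N%:Z)
                 + Ind (H lam) (h%:Z - (3 * 2 ^ R.-1)%N%:Z)).
Proof.
case: R => [//|R] _ Hm _ /and3P[Hsort Hpos /eqP Hsum] [hH hn hnot _] /=.
have E1 : (2 ^ R.+1 = 2 * 2 ^ R)%N by rewrite expnS.
have E2 : (2 ^ R.+2 = 4 * 2 ^ R)%N by rewrite !expnS mulnA.
have Hq : (0 < 2 ^ R)%N by rewrite expn_gt0.
have Hb : forall x, x \in H lam -> (x < 2 ^ R.+2)%N.
  move=> x Hx; have := @H_bound lam x Hpos Hx; rewrite Hsum; lia.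
have Hu := @H_uniq lam Hsort.
have Hh := Hb _ hH.
have -> : eta_sign R.+1 lam h = \prod_(x <- H lam | x != h) (-1) ^+ ex R h x.
  rewrite /eta_sign big_seq_cond [RHS]big_seq_cond; apply: eq_bigr => x /andP[Hx Hxh].
  apply: factor => //; first exact: Hb.
  by apply/eqP => E; rewrite -E Hx in hnot.
rewrite -(big_morph (fun n => (-1 : rat) ^+ n) (exprD (-1)) (expr0 (-1))).
rewrite /ex !big_split /= !sum_count.
have -> : (count (predI (fun x => x != h) (fun x => (h - 2 ^ R.+1 < x) && (x < h))) (H lam)
   = Nlam R.+1 lam h)%N.
  by apply: eq_count => x /=; lia.
have -> : (count (predI (fun x => x != h) (fun x => x + 2 ^ R == h)) (H lam)
   = ((h - 2 ^ R) \in H lam))%N.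
  rewrite -count_uniq_mem //; apply: eq_count => x /=; lia.
have -> : (count (predI (fun x => x != h) (fun x => x == h + 2 ^ R)) (H lam)
   = ((h + 2 ^ R) \in H lam))%N.
  rewrite -count_uniq_mem //; apply: eq_count => x /=; lia.
have -> : (count (predI (fun x => x != h) (fun x => x + 3 * 2 ^ R == h)) (H lam)
   = if (3 * 2 ^ R <= h) then ((h - 3 * 2 ^ R) \in H lam : nat) else 0)%N.
  case: leqP => H3.
    rewrite -count_uniq_mem //; apply: eq_count => x /=; lia.
  by apply/eqP; rewrite -leqn0 leqNgt -has_count; apply/hasPn => x _ /=; lia.
rewrite !Ind_sub.
have -> : (2 ^ R <= h)%N = true by lia.
set N := Nlam _ _ _.
set I1 := ((h - 2 ^ R)%N \in H lam : nat).
set I3 := (if (3 * 2 ^ R <= h)%N then _ else _).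

set I2 := ((h + 2 ^ R)%N \in H lam : nat).
have -> : (if (3 * 2 ^ R <= h)%N then (((h - 3 * 2 ^ R)%N \in H lam : nat)%:Z) else 0) = I3%:Z by rewrite /I3; case: ifP.
have -> : N%:Z - I1%:Z + I2%:Z + I3%:Z = (N + I2 + I3)%N%:Z - I1%:Z by lia.
rewrite sign_sub; congr (_ ^+ _); lia.
Qed.
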